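(* Let $U\subseteq\mathcal{B}$ be a maximal avoidable set containing an element $(a,0)$ with $a\ge 1$. Then there is an odd integer $d<a$ such that $U=\{(a,0),(0,0)\}\cup\{(c,d)\in\mathcal{B}\mid \max\{c,c+d\}<a\}$.
   Context: The bicyclic inverse semigroup is $\mathcal{B}=\{(a,b)\in\mathbb{Z}\times\mathbb{Z}\mid a\ge 0,\ a+b\ge 0\}$ with multiplication $(a,b)(c,d)=(\max\{c+d,a\}-d,\ b+d)$. A subset $U\subseteq\mathcal{B}$ is called avoidable if $\mathcal{B}$ can be partitioned into two subsets $A$ and $B$ such that no element of $U$ can be written as a product $xy$ of two distinct elements $x\neq y$ both in $A$, or both in $B$. A maximal avoidable set is an avoidable set not properly contained in any other avoidable subset of $\mathcal{B}$. *)

(* Defs.v *)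
From Stdlib Require Import ZArith.
Open Scope Z_scope.

(* The bicyclic inverse semigroup B = {(a,b) in Z x Z | a >= 0, a + b >= 0}. *)
Definition inB (p : Z * Z) : Prop := 0 <= fst p /\ 0 <= fst p + snd p.

Definition bmul (x y : Z * Z) : Z * Z :=
  (Z.max (fst y + snd y) (fst x) - snd y, snd x + snd y).

Definition subsetB (U : Z * Z -> Prop) : Prop := forall p, U p -> inB p.

Definition avoidable (U : Z * Z -> Prop) : Prop :=
  subsetB U /\
  exists A : Z * Z -> Prop,
    forall x y, inB x -> inB y -> x <> y ->
      (A x <-> A y) -> ~ U (bmul x y).

Definition maximal_avoidable (U : Z * Z -> Prop) : Prop :=
  avoidable U /\
  forall V : Z * Z -> Prop, avoidable V -> (forall p, U p -> V p) ->
    forall p, V p -> U p.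

(* Main.v *)
Require Import Defs.
From Stdlib Require Import ZArith Lia Classical.
Open Scope Z_scope.


Definition col (d k : Z) : bool :=
  if Z.eqb (k mod Z.abs d) 0 then Z.ltb 0 (k*d) else Z.ltb (2*(k mod Z.abs d)) (Z.abs d).

Lemma abs_cases (d : Z) : Z.Odd d -> exists D i, D = Z.abs d /\ 0 < D /\ D = 2*i+1 /\ (d = D \/ d = -D).
Proof.
  intros [j Hj]. exists (Z.abs d).
  destruct (Z.abs_spec d) as [[H1 H2]|[H1 H2]].
  - exists j. lia.
  - exists (-j-1). lia.
Qed.

Lemma col_gen (d k k' : Z) : Z.Odd d -> k <> 0 -> k' <> 0 ->
  (exists e, k' = -k + e * Z.abs d) -> k' * d = - (k * d) + d * d -> False \/ True.
Proof. auto. Qed.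

Lemma col_neg (d k : Z) : Z.Odd d -> k <> 0 -> col d (-k) = negb (col d k).
Proof.
  intros Hd Hk. destruct (abs_cases d Hd) as [D [i [HD [HDp [HDi Hs]]]]].
  unfold col. rewrite <- HD.
  pose proof (Z.div_mod k D ltac:(lia)) as Hkm.
  pose proof (Z.mod_pos_bound k D HDp) as Hb.
  set (q := k / D) in *. set (r := k mod D) in *.
  destruct (Z.eqb_spec r 0) as [Hr|Hr].
  - assert (E : 0 = (-k) mod D) by (apply Z.mod_unique_pos with (q := -q); lia).
    rewrite <- E. simpl.
    destruct (Z.ltb_spec 0 (k*d)), (Z.ltb_spec 0 (-k*d)); simpl; try reflexivity; nia.
  - assert (E : D - r = (-k) mod D) by (apply Z.mod_unique_pos with (q := -q-1); lia).
    rewrite <- E. destruct (Z.eqb_spec (D - r) 0); [lia|].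
    destruct (Z.ltb_spec (2*r) D), (Z.ltb_spec (2*(D-r)) D); simpl; try reflexivity; lia.
Qed.

Lemma col_sub (d k : Z) : Z.Odd d -> k <> 0 -> k <> d -> col d (d - k) = negb (col d k).
Proof.
  intros Hd Hk Hkd. destruct (abs_cases d Hd) as [D [i [HD [HDp [HDi Hs]]]]].
  unfold col. rewrite <- HD.
  pose proof (Z.div_mod k D ltac:(lia)) as Hkm.
  pose proof (Z.mod_pos_bound k D HDp) as Hb.
  set (q := k / D) in *. set (r := k mod D) in *.
  destruct (Z.eqb_spec r 0) as [Hr|Hr].
  - destruct Hs as [Hs|Hs].
    + assert (E : 0 = (d-k) mod D) by (apply Z.mod_unique_pos with (q := 1-q); lia).
      rewrite <- E. simpl. subst d.
      assert (q <> 0) by lia. assert (q <> 1) by lia.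
      destruct (Z.ltb_spec 0 (k*D)), (Z.ltb_spec 0 ((D-k)*D)); simpl; try reflexivity; nia.
    + assert (E : 0 = (d-k) mod D) by (apply Z.mod_unique_pos with (q := -1-q); lia).
      rewrite <- E. simpl. subst d.
      assert (q <> 0) by lia. assert (q <> -1) by lia.
      destruct (Z.ltb_spec 0 (k*(-D))), (Z.ltb_spec 0 ((-D-k)*(-D))); simpl; try reflexivity; nia.
  - assert (E : D - r = (d-k) mod D).
    { destruct Hs; [apply Z.mod_unique_pos with (q := -q); lia
                  | apply Z.mod_unique_pos with (q := -q-2); lia]. }
    rewrite <- E. destruct (Z.eqb_spec (D - r) 0); [lia|].
    destruct (Z.ltb_spec (2*r) D), (Z.ltb_spec (2*(D-r)) D); simpl; try reflexivity; lia.
Qed.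

Lemma col_d (d : Z) : Z.Odd d -> col d d = true.
Proof.
  intros Hd. destruct (abs_cases d Hd) as [D [i [HD [HDp [HDi Hs]]]]].
  unfold col. rewrite <- HD.
  assert (E : 0 = d mod D).
  { destruct Hs; [apply Z.mod_unique_pos with (q := 1); lia | apply Z.mod_unique_pos with (q := -1); lia]. }
  rewrite <- E. simpl. destruct (Z.ltb_spec 0 (d*d)); [reflexivity | nia].
Qed.


Definition S (a d : Z) (p : Z * Z) : Prop :=
  p = (a, 0) \/ p = (0, 0) \/
  (inB p /\ Z.max (fst p) (fst p + snd p) < a /\ snd p = d).

Definition colA (a d : Z) (p : Z * Z) : Prop :=
  if Z.eq_dec (snd p) 0 then fst p = a else col d (snd p) = true.

Lemma S_avoidable (a d : Z) : 1 <= a -> Z.Odd d -> avoidable (S a d).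
Proof.
  intros Ha Hd. assert (Hd0 : d <> 0) by (destruct Hd; lia).
  split.
  { intros p [->|[->|[H _]]]; [unfold inB; simpl; lia | unfold inB; simpl; lia | exact H]. }
  exists (colA a d).
  intros [x1 x2] [y1 y2] Hx Hy Hne Hiff HS.
  unfold inB in Hx, Hy; simpl in Hx, Hy.
  unfold colA in Hiff; simpl in Hiff.
  unfold bmul, S in HS; simpl in HS.
  destruct HS as [E|[E|[Hb [Hm Hs]]]].
  - injection E as E1 E2.
    destruct (Z.eq_dec x2 0), (Z.eq_dec y2 0); try lia.
    + subst x2 y2. destruct (Z.eq_dec x1 a).
      * apply Hne. f_equal. lia.
      * assert (y1 <> a) by tauto. lia.
    + assert (y2 = - x2) by lia. subst y2. rewrite col_neg in Hiff by auto.
      destruct (col d x2); simpl in Hiff; intuition discriminate.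
  - injection E as E1 E2.
    destruct (Z.eq_dec x2 0), (Z.eq_dec y2 0); try lia.
    + subst x2 y2. apply Hne. f_equal; lia.
    + assert (y2 = - x2) by lia. subst y2. rewrite col_neg in Hiff by auto.
      destruct (col d x2); simpl in Hiff; intuition discriminate.
  - destruct (Z.eq_dec x2 0), (Z.eq_dec y2 0); try lia.
    + assert (y2 = d) by lia. subst y2. rewrite col_d in Hiff by auto.
      assert (x1 = a) by tauto. lia.
    + assert (x2 = d) by lia. subst x2. rewrite col_d in Hiff by auto.
      assert (y1 = a) by tauto. lia.
    + assert (x2 = d - y2) by lia. subst x2. rewrite col_sub in Hiff by (auto || lia).
      destruct (col d y2); simpl in Hiff; intuition discriminate.
Qed.


Definition good (U : Z*Z -> Prop) (A : Z*Z -> Prop) : Prop :=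
  forall x y, inB x -> inB y -> x <> y -> (A x <-> A y) -> ~ U (bmul x y).

Lemma opp U A : good U A -> forall x y p, inB x -> inB y -> x <> y ->
  bmul x y = p -> U p -> ~ (A x <-> A y).
Proof. intros HG x y p Hx Hy Hne E Hp Hi. subst p. exact (HG x y Hx Hy Hne Hi Hp). Qed.

Ltac oppr HG x y p :=
  let H := fresh "O" in
  assert (H := opp _ _ HG x y p ltac:(unfold inB; simpl; lia) ltac:(unfold inB; simpl; lia)
                 ltac:(let E := fresh in intro E; injection E; lia)
                 ltac:(unfold bmul; simpl; f_equal; lia) ltac:(assumption)).

Lemma nn (P Q R : Prop) : ~(P <-> Q) -> ~(R <-> Q) -> (P <-> R).
Proof. intros H1 H2. destruct (classic P), (classic Q), (classic R); tauto. Qed.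
Lemma nnl (P Q R : Prop) : ~(Q <-> P) -> ~(Q <-> R) -> (P <-> R).
Proof. intros H1 H2. destruct (classic P), (classic Q), (classic R); tauto. Qed.


Lemma base (U A : Z*Z -> Prop) (a : Z) (HG : good U A) (Ha : 1 <= a) (HUa : U (a, 0)) : ~ (A (0,0) <-> A (a,0)).
Proof. oppr HG (a,0) (0,0) (a,0). tauto. Qed.

Lemma F1 (U A : Z*Z -> Prop) (a : Z) (HG : good U A) (Ha : 1 <= a) (HUa : U (a, 0)) m : U (m, 0) -> 0 <= m -> m = 0 \/ m = a.
Proof.
  intros Hp Hm. pose proof (base U A a HG Ha HUa) as B.
  destruct (Z.eq_dec m 0); [auto|]. destruct (Z.eq_dec m a); [auto|]. exfalso.
  destruct (Z_lt_le_dec m a).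
  - oppr HG (m,0) (0,0) (m,0). oppr HG (a,0) (m,0) (a,0).
    destruct (classic (A (0,0))), (classic (A (a,0))), (classic (A (m,0))); tauto.
  - oppr HG (m,0) (0,0) (m,0). oppr HG (m,0) (a,0) (m,0).
    destruct (classic (A (0,0))), (classic (A (a,0))), (classic (A (m,0))); tauto.
Qed.

Lemma F2 (U A : Z*Z -> Prop) (a : Z) (HG : good U A) (Ha : 1 <= a) (HUa : U (a, 0)) m s : U (m, s) -> inB (m, s) -> s <> 0 -> m < a.
Proof.
  intros Hp Hb Hs. unfold inB in Hb; simpl in Hb. pose proof (base U A a HG Ha HUa) as B.
  destruct (Z_lt_le_dec m a); [auto|]. exfalso.
  oppr HG (m,s) (0,0) (m,s). oppr HG (m,s) (a,0) (m,s).
  destruct (classic (A (0,0))), (classic (A (a,0))), (classic (A (m,s))); tauto.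
Qed.

Lemma F3 (U A : Z*Z -> Prop) (a : Z) (HG : good U A) (Ha : 1 <= a) (HUa : U (a, 0)) m s : U (m, s) -> inB (m, s) -> s <> 0 -> m + s < a.
Proof.
  intros Hp Hb Hs. unfold inB in Hb; simpl in Hb. pose proof (base U A a HG Ha HUa) as B.
  destruct (Z_lt_le_dec (m+s) a); [auto|]. exfalso.
  oppr HG (0,0) (m,s) (m,s). oppr HG (a,0) (m,s) (m,s).
  destruct (classic (A (0,0))), (classic (A (a,0))), (classic (A (m,s))); tauto.
Qed.

Lemma F4 (U A : Z*Z -> Prop) (a : Z) (HG : good U A) (Ha : 1 <= a) (HUa : U (a, 0)) m s : U (m, s) -> 0 <= m -> 0 <= m + s -> s <> 0 -> m < a -> m + s < a -> Z.Odd s.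
Proof.
  intros Hp H1 H2 Hs H3 H4.
  destruct (Z.Even_or_Odd s) as [[t Ht]|Ho]; [exfalso|exact Ho].
  oppr HG (m+t,t) (m,t) (m,s).
  oppr HG (a+t,-t) (m+t,t) (a,0).
  oppr HG (a+t,-t) (m,t) (a,0).
  destruct (classic (A (m+t,t))), (classic (A (m,t))), (classic (A (a+t,-t))); tauto.
Qed.

Lemma F5 (U A : Z*Z -> Prop) (a : Z) (HG : good U A) (Ha : 1 <= a) (HUa : U (a, 0)) m s m' s' : U (m, s) -> U (m', s') -> Z.Odd s -> Z.Odd s' -> s <> s' ->
  0 <= m -> 0 <= m + s -> m < a -> m + s < a ->
  0 <= m' -> 0 <= m' + s' -> m' < a -> m' + s' < a -> m + s <= m' + s' -> False.
Proof.
  intros Hp Hp' [i Hi] [j Hj] Hss H1 H2 H3 H4 H1' H2' H3' H4' Hle.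
  oppr HG (m,s) (m,0) (m,s). oppr HG (a,0) (m,0) (a,0).
  oppr HG (m',s') (m',0) (m',s'). oppr HG (a,0) (m',0) (a,0).
  oppr HG (m,s) (m', s'-s) (m',s').
  oppr HG (a-s+s', s-s') (m', s'-s) (a,0).
  oppr HG (a-s+s', s-s') (a, s'-s) (a,0).
  assert (P1 := nn _ _ _ O O0). assert (P2 := nn _ _ _ O1 O2).
  assert (P3 := nn _ _ _ O3 O4).
  destruct (Z_le_gt_dec 0 (m + s')).
  - oppr HG (m+s', s-s') (m, s') (m,s).
    oppr HG (a+s', -s') (m, s') (a,0).
    oppr HG (a+s', -s') (m', s') (a,0).
    oppr HG (m+s', s-s') (a, s'-s) (a,0).
    assert (Q1 := nn _ _ _ O9 O5). assert (Q2 := nnl _ _ _ O7 O8).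
    tauto.
  - oppr HG (m+s-s', s') (Z.max 0 (s'-s), s-s') (m,s).
    oppr HG (m+s-s', s') (a, -s') (a,0).
    oppr HG (m', s') (a, -s') (a,0).
    oppr HG (Z.max 0 (s'-s), s-s') (a, s'-s) (a,0).
    assert (Q1 := nn _ _ _ O7 O8). assert (Q2 := nn _ _ _ O9 O5).
    tauto.
Qed.

Lemma U_sub (U : Z*Z -> Prop) (a : Z) : avoidable U -> 1 <= a -> U (a, 0) ->
  exists d, Z.Odd d /\ d < a /\ forall p, U p -> S a d p.
Proof.
  intros [Hsub [A HG]] Ha HUa. change (good U A) in HG.
  assert (Gen : forall m s, U (m, s) -> (m, s) <> (a, 0) -> (m, s) <> (0, 0) ->
            s <> 0 /\ 0 <= m /\ 0 <= m + s /\ m < a /\ m + s < a /\ Z.Odd s).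
  { intros m s Hp N1 N2. pose proof (Hsub _ Hp) as Hb. unfold inB in Hb; simpl in Hb.
    destruct (Z.eq_dec s 0) as [->|Hs].
    { destruct (F1 U A a HG Ha HUa m Hp ltac:(lia)) as [->| ->]; tauto. }
    pose proof (F2 U A a HG Ha HUa m s Hp (Hsub _ Hp) Hs).
    pose proof (F3 U A a HG Ha HUa m s Hp (Hsub _ Hp) Hs).
    repeat split; try lia. apply (F4 U A a HG Ha HUa m s); lia || auto. }
  destruct (classic (exists p, U p /\ p <> (a, 0) /\ p <> (0, 0))) as [[[m s] [Hp [N1 N2]]]|Hno].
  - destruct (Gen m s Hp N1 N2) as (Hs & H1 & H2 & H3 & H4 & Ho).
    exists s. split; [exact Ho|]. split; [lia|].
    intros [m' s'] Hq. unfold S.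
    destruct (classic ((m', s') = (a, 0))) as [E|E1]; [left; exact E|].
    destruct (classic ((m', s') = (0, 0))) as [E|E2]; [right; left; exact E|].
    right; right. destruct (Gen m' s' Hq E1 E2) as (Hs' & H1' & H2' & H3' & H4' & Ho').
    split; [unfold inB; simpl; lia|]. simpl. split; [lia|].
    destruct (Z.eq_dec s' s) as [->|Hne]; [reflexivity|exfalso].
    destruct (Z_le_gt_dec (m + s) (m' + s')).
    + apply (F5 U A a HG Ha HUa m s m' s'); auto; lia.
    + apply (F5 U A a HG Ha HUa m' s' m s); auto; lia.
  - exists (-1). split; [exists (-1); lia|]. split; [lia|].
    intros p Hp. unfold S.
    destruct (classic (p = (a, 0))) as [E|E1]; [left; exact E|].
    destruct (classic (p = (0, 0))) as [E|E2]; [right; left; exact E|].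
    exfalso. apply Hno. exists p. auto.
Qed.

Theorem proposition5p5 (U : Z * Z -> Prop) (a : Z) :
  maximal_avoidable U -> 1 <= a -> U (a, 0) ->
  exists d : Z, Z.Odd d /\ d < a /\
    forall p : Z * Z,
      U p <->
      (p = (a, 0) \/ p = (0, 0) \/
       (inB p /\ Z.max (fst p) (fst p + snd p) < a /\ snd p = d)).
Proof.
  intros [Hav Hmax] Ha HUa.
  destruct (U_sub U a Hav Ha HUa) as [d [Hd [Hda Hs]]].
  exists d. split; [exact Hd|]. split; [exact Hda|].
  intros p. split.
  - intros Hp. exact (Hs p Hp).
  - intros Hp. exact (Hmax (S a d) (S_avoidable a d Ha Hd) Hs p Hp).
Qed.
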